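(* Assume proportional damping $D=\alpha M+\beta K$ with $\alpha,\beta\ge0$. Let $\nu_p,\nu_q\ge1$, let $\zeta_1,\dots,\zeta_{\nu_p}>0$ and $\omega_1,\dots,\omega_{\nu_q}>0$ be such that $G(\pm i\zeta_j)$, $G(\pm i\omega_k)$ exist, and let $\rho_j,\varphi_k$ be real weights. Form $\widetilde{\mathbb M},\widetilde{\mathbb K}\in\mathbb{C}^{2\nu_q\times 2\nu_p}$, $\widetilde{\mathbb B}\in\mathbb{C}^{2\nu_q}$, $\widetilde{\mathbb C}\in\mathbb{C}^{1\times2\nu_p}$ using the ordered node lists $(\zeta_1,-\zeta_1,\zeta_2,-\zeta_2,\dots,\zeta_{\nu_p},-\zeta_{\nu_p})$ with weights $(\rho_1,\rho_1,\dots,\rho_{\nu_p},\rho_{\nu_p})$ and $(\omega_1,-\omega_1,\dots,\omega_{\nu_q},-\omega_{\nu_q})$ with weights $(\varphi_1,\varphi_1,\dots,\varphi_{\nu_q},\varphi_{\nu_q})$. For $1\le k\le\nu_q$, $1\le j\le\nu_p$, let $\widetilde{\mathbb M}^{(2)}_{k,j},\widetilde{\mathbb K}^{(2)}_{k,j}\in\mathbb{C}^{2\times2}$ be the submatrices in rows $2k-1,2k$ and columns $2j-1,2j$, $\widetilde{\mathbb B}^{(2)}_k$ the entries $2k-1,2k$ of $\widetilde{\mathbb B}$, $\widetilde{\mathbb C}^{(2)}_j$ the entries $2j-1,2j$ of $\widetilde{\mathbb C}$, and define $$\widetilde{\mathbb M}^{\mathrm R}_{k,j}=\mathcal F_2\widetilde{\mathbb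 M}^{(2)}_{k,j}\mathcal F_1^{\mathrm H},\quad \widetilde{\mathbb K}^{\mathrm R}_{k,j}=\mathcal F_2\widetilde{\mathbb K}^{(2)}_{k,j}\mathcal F_1^{\mathrm H},\quad \widetilde{\mathbb B}^{\mathrm R}_k=\mathcal F_2\widetilde{\mathbb B}^{(2)}_k,\quad \widetilde{\mathbb C}^{\mathrm R}_j=\widetilde{\mathbb C}^{(2)}_j\mathcal F_1^{\mathrm H}.$$ Then: (i) $\widetilde{\mathbb M}^{\mathrm R}_{k,j}$ and $\widetilde{\mathbb K}^{\mathrm R}_{k,j}$ are real $2\times2$ matrices, and $$\widetilde{\mathbb B}^{\mathrm R}_k=\sqrt2\,\varphi_k\begin{bmatrix}\mathrm{Re}\,H(i\omega_k)\\-\mathrm{Im}\,H(i\omega_k)\end{bmatrix},\qquad \widetilde{\mathbb C}^{\mathrm R}_j=\sqrt2\,\rho_j\zeta_j\big[\mathrm{Re}\,H(i\zeta_j)\ \ \mathrm{Im}\,H(i\zeta_j)\big];$$ (ii) with $\Omega_{k,2}=\omega_k^2I_2$, $\Omega_{k,1}=\begin{bmatrix}0&\omega_k\\-\omega_k&0\end{bmatrix}$, $\Theta_{j,2}=\zeta_j^2I_2$, $\Theta_{j,1}=\begin{bmatrix}0&\zeta_j\\-\zeta_j&0\end{bmatrix}$, $$H_{\zeta,kj}=2\varphi_k\rho_j\zeta_j\begin{bmatrix}\mathrm{Re}\,H(i\zeta_j)&\mathrm{Im}\,H(i\zeta_j)\\0&0\end{bmatrix},\qquad H_{\omega,kj}=2\varphi_k\rho_j\zeta_j\begin{bmatrix}\mathrm{Re}\,H(i\omega_k)&0\\-\mathrm{Im}\,H(i\omega_k)&0\end{bmatrix},$$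 the following hold: $$-\Omega_{k,2}\widetilde{\mathbb M}^{\mathrm R}_{k,j}+\Omega_{k,1}\big(\alpha\widetilde{\mathbb M}^{\mathrm R}_{k,j}+\beta\widetilde{\mathbb K}^{\mathrm R}_{k,j}\big)+\widetilde{\mathbb K}^{\mathrm R}_{k,j}=H_{\zeta,kj},$$ $$-\widetilde{\mathbb M}^{\mathrm R}_{k,j}\Theta_{j,2}+\big(\alpha\widetilde{\mathbb M}^{\mathrm R}_{k,j}+\beta\widetilde{\mathbb K}^{\mathrm R}_{k,j}\big)\Theta_{j,1}+\widetilde{\mathbb K}^{\mathrm R}_{k,j}=H_{\omega,kj}.$$
   Context: Single-input single-output second-order system: $M,D,K\in\mathbb{R}^{n\times n}$ with $M$ nonsingular, $B\in\mathbb{R}^{n\times1}$, $C\in\mathbb{R}^{1\times n}$, $G(s)=(s^2M+sD+K)^{-1}$ (wherever the inverse exists), and transfer function $H(s)=CG(s)B$. The superscript $\mathrm H$ denotes conjugate transpose. For an ordered list of real nodes $z_1,\dots,z_{N_p}$ with real weights $r_1,\dots,r_{N_p}$ and an ordered list of real nodes $w_1,\dots,w_{N_q}$ with real weights $f_1,\dots,f_{N_q}$, define $\widetilde U\in\mathbb{C}^{n\times N_p}$ with $j$-th column $r_jz_jG(iz_j)B$, $\widetilde L^{\mathrm H}\in\mathbb{C}^{N_q\times n}$ with $k$-th row $f_kCG(iw_k)$, and $\widetilde{\mathbb M}=\widetilde L^{\mathrm H}M\widetilde U$, $\widetilde{\mathbb K}=\widetilde L^{\mathrm H}K\widetilde U$,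 $\widetilde{\mathbb B}=\widetilde L^{\mathrm H}B$ (entries $f_kH(iw_k)$), $\widetilde{\mathbb C}=C\widetilde U$ (entries $r_jz_jH(iz_j)$). The unitary matrices are $$\mathcal F_1=\frac{1}{\sqrt2}\begin{bmatrix}1&-1\\ i&i\end{bmatrix},\qquad \mathcal F_2=\frac{1}{\sqrt2}\begin{bmatrix}1&1\\ i&-i\end{bmatrix}.$$ *)

(* Defs.v *)
From HB Require Import structures.
From mathcomp Require Import all_boot all_order all_algebra.
From mathcomp Require Import complex.
Set Implicit Arguments. Unset Strict Implicit. Unset Printing Implicit Defensive.
Import GRing.Theory Num.Theory.
Local Open Scope ring_scope.
Local Open Scope complex_scope.

Section Defs.
Variable R : rcfType.
Local Notation C := R[i].

Definition iC : C := Complex 0 1.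

Definition cmx (m p : nat) (A : 'M[R]_(m, p)) : 'M[C]_(m, p) :=
  map_mx (fun x => x%:C) A.

Definition ctrmx (m p : nat) (A : 'M[C]_(m, p)) : 'M[C]_(p, m) :=
  map_mx (@conjc R) A^T.

(* the pencil s^2 M + s D + K, and G(s) = its inverse (meaningful when it is invertible) *)
Definition pencil n (M D K : 'M[R]_n) (s : C) : 'M[C]_n :=
  s ^+ 2 *: cmx M + s *: cmx D + cmx K.
Definition Gres n (M D K : 'M[R]_n) (s : C) : 'M[C]_n := invmx (pencil M D K s).
Definition Gexists n (M D K : 'M[R]_n) (s : C) : Prop := pencil M D K s \in unitmx.
Definition Htf n (M D K : 'M[R]_n) (B : 'cV[R]_n) (Cm : 'rV[R]_n) (s : C) : C :=
  (cmx Cm *m Gres M D K s *m cmx B) 0 0.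

Definition Utl n N (M D K : 'M[R]_n) (B : 'cV[R]_n) (z r : 'I_N -> R) : 'M[C]_(n, N) :=
  \matrix_(a < n, j < N) ((r j * z j)%:C * (Gres M D K (iC * (z j)%:C) *m cmx B) a 0).
Definition LtlH n N (M D K : 'M[R]_n) (Cm : 'rV[R]_n) (w f : 'I_N -> R) : 'M[C]_(N, n) :=
  \matrix_(k < N, a < n) ((f k)%:C * (cmx Cm *m Gres M D K (iC * (w k)%:C)) 0 a).

Definition MMt n Np Nq (M D K : 'M[R]_n) (B : 'cV[R]_n) (Cm : 'rV[R]_n)
  (z r : 'I_Np -> R) (w f : 'I_Nq -> R) : 'M[C]_(Nq, Np) :=
  LtlH M D K Cm w f *m cmx M *m Utl M D K B z r.
Definition KKt n Np Nq (M D K : 'M[R]_n) (B : 'cV[R]_n) (Cm : 'rV[R]_n)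
  (z r : 'I_Np -> R) (w f : 'I_Nq -> R) : 'M[C]_(Nq, Np) :=
  LtlH M D K Cm w f *m cmx K *m Utl M D K B z r.
Definition BBt n Nq (M D K : 'M[R]_n) (Cm : 'rV[R]_n) (B : 'cV[R]_n)
  (w f : 'I_Nq -> R) : 'cV[C]_Nq :=
  LtlH M D K Cm w f *m cmx B.
Definition CCt n Np (M D K : 'M[R]_n) (B : 'cV[R]_n) (Cm : 'rV[R]_n)
  (z r : 'I_Np -> R) : 'rV[C]_Np :=
  cmx Cm *m Utl M D K B z r.

Definition mx2 (T : Type) (a b c d : T) : 'M[T]_2 :=
  \matrix_(i < 2, j < 2) (if i == 0 :> nat then (if j == 0 :> nat then a else b)
                          else (if j == 0 :> nat then c else d)).
Definition cv2 (T : Type) (a b : T) : 'cV[T]_2 :=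
  \matrix_(i < 2, j < 1) (if i == 0 :> nat then a else b).
Definition rv2 (T : Type) (a b : T) : 'rV[T]_2 :=
  \matrix_(i < 1, j < 2) (if j == 0 :> nat then a else b).

Definition F1 : 'M[C]_2 := (Num.sqrt (2 : R))^-1%:C *: mx2 1 (-1) iC iC.
Definition F2 : 'M[C]_2 := (Num.sqrt (2 : R))^-1%:C *: mx2 1 1 iC (- iC).

End Defs.

(* index bookkeeping: 0-based index j of 'I_(2*m) belongs to pair j %/ 2;
   0-based 2k, 2k+1 correspond to the 1-based rows 2k+1, 2k+2 *)
Lemma half_ord_proof m (j : 'I_(2 * m)) : (j %/ 2 < m)%N.
Proof. by rewrite ltn_divLR // -[(m * 2)%N]mulnC ltn_ord. Qed.
Definition half_ord m (j : 'I_(2 * m)) : 'I_m := Ordinal (half_ord_proof j).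

Lemma blk_proof m (k : 'I_m) (a : 'I_2) : (2 * k + a < 2 * m)%N.
Proof.
have hk := ltn_ord k; have ha := ltn_ord a.
apply: (@leq_trans (2 * k.+1)); last by rewrite leq_mul2l.
by rewrite mulnS addnC ltn_add2r.
Qed.
Definition blk m (k : 'I_m) (a : 'I_2) : 'I_(2 * m) := Ordinal (blk_proof k a).

Definition ilv_nodes (R : pzRingType) m (x : 'I_m -> R) (j : 'I_(2 * m)) : R :=
  if odd j then - x (half_ord j) else x (half_ord j).
Definition ilv_weights (R : Type) m (r : 'I_m -> R) (j : 'I_(2 * m)) : R :=
  r (half_ord j).

Definition blk2 (T : Type) p q (X : 'M[T]_(2 * q, 2 * p)) (k : 'I_q) (j : 'I_p) : 'M[T]_2 :=
  \matrix_(a < 2, b < 2) X (blk k a) (blk j b).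
Definition blkc2 (T : Type) q (X : 'cV[T]_(2 * q)) (k : 'I_q) : 'cV[T]_2 :=
  \matrix_(a < 2, b < 1) X (blk k a) 0.
Definition blkr2 (T : Type) p (X : 'rV[T]_(2 * p)) (j : 'I_p) : 'rV[T]_2 :=
  \matrix_(a < 1, b < 2) X 0 (blk j b).

(* Main.v *)
Require Import Defs.
From HB Require Import structures.
From mathcomp Require Import all_boot all_order all_algebra.
From mathcomp Require Import complex.
From mathcomp Require Import ring zify.
Import GRing.Theory Num.Theory.
Local Open Scope ring_scope.
Local Open Scope complex_scope.

Lemma ord2P (P : 'I_2 -> Prop) : P 0 -> P 1 -> forall i, P i.
Proof.
move=> h0 h1 [[|[|i]] hi] //.
- by have -> : Ordinal hi = 0 by apply: val_inj.
- by have -> : Ordinal hi = 1 by apply: val_inj.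
Qed.

Section MX2.
Variable T : pzRingType.
Implicit Types a b c d e f g h x : T.

Lemma mx2E (X : 'M[T]_2) : X = mx2 (X 0 0) (X 0 1) (X 1 0) (X 1 1).
Proof. by apply/matrixP; elim/ord2P => /=; elim/ord2P; rewrite mxE. Qed.

Lemma mx2_mul a b c d e f g h :
  mx2 a b c d *m mx2 e f g h = mx2 (a*e+b*g) (a*f+b*h) (c*e+d*g) (c*f+d*h).
Proof. by apply/matrixP; elim/ord2P; elim/ord2P; rewrite !mxE !big_ord_recr big_ord0 /= !mxE /= add0r. Qed.

Lemma mx2_cv2 a b c d e f : mx2 a b c d *m cv2 e f = cv2 (a*e+b*f) (c*e+d*f).
Proof. by apply/matrixP; elim/ord2P => j; rewrite !ord1 !mxE !big_ord_recr big_ord0 /= !mxE /= add0r. Qed.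

Lemma rv2_mx2 a b c d e f : rv2 e f *m mx2 a b c d = rv2 (e*a+f*c) (e*b+f*d).
Proof. by apply/matrixP => i; rewrite !ord1; elim/ord2P; rewrite !mxE !big_ord_recr big_ord0 /= !mxE /= add0r. Qed.

Lemma mx2_add a b c d e f g h : mx2 a b c d + mx2 e f g h = mx2 (a+e) (b+f) (c+g) (d+h).
Proof. by apply/matrixP; elim/ord2P; elim/ord2P; rewrite /cmx /ctrmx !mxE. Qed.

Lemma mx2_opp a b c d : - mx2 a b c d = mx2 (-a) (-b) (-c) (-d).
Proof. by apply/matrixP; elim/ord2P; elim/ord2P; rewrite /cmx /ctrmx !mxE. Qed.

Lemma mx2_scale x a b c d : x *: mx2 a b c d = mx2 (x*a) (x*b) (x*c) (x*d).
Proof. by apply/matrixP; elim/ord2P; elim/ord2P; rewrite /cmx /ctrmx !mxE. Qed.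

Lemma cv2_scale x a b : x *: cv2 a b = cv2 (x*a) (x*b).
Proof. by apply/matrixP; elim/ord2P => j; rewrite /cmx !mxE. Qed.

Lemma rv2_scale x a b : x *: rv2 a b = rv2 (x*a) (x*b).
Proof. by apply/matrixP => i; elim/ord2P; rewrite /cmx !mxE. Qed.

Lemma mx2_scalar x : x%:M = mx2 x 0 0 x :> 'M[T]_2.
Proof. by apply/matrixP; elim/ord2P; elim/ord2P; rewrite /cmx /ctrmx !mxE. Qed.

Lemma blk2E p q (X : 'M[T]_(2 * q, 2 * p)) k j :
  blk2 X k j = mx2 (X (blk k 0) (blk j 0)) (X (blk k 0) (blk j 1))
                   (X (blk k 1) (blk j 0)) (X (blk k 1) (blk j 1)).
Proof. by apply/matrixP; elim/ord2P; elim/ord2P; rewrite /cmx /ctrmx !mxE. Qed.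

Lemma blkc2E q (X : 'cV[T]_(2 * q)) k : blkc2 X k = cv2 (X (blk k 0) 0) (X (blk k 1) 0).
Proof. by apply/matrixP; elim/ord2P => j; rewrite !ord1 !mxE. Qed.

Lemma blkr2E p (X : 'rV[T]_(2 * p)) j : blkr2 X j = rv2 (X 0 (blk j 0)) (X 0 (blk j 1)).
Proof. by apply/matrixP => i; rewrite !ord1; elim/ord2P; rewrite !mxE. Qed.
End MX2.

Notation cRe := complex.Re.
Notation cIm := complex.Im.
Section CX.
Variable R : rcfType.
Local Notation C := R[i].
Implicit Types (x y : C) (a b c d : R).

Lemma cmx_mx2 a b c d : cmx (mx2 a b c d) = mx2 a%:C b%:C c%:C d%:C.
Proof. by apply/matrixP; elim/ord2P; elim/ord2P; rewrite /cmx /ctrmx !mxE. Qed.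
Lemma cmx_cv2 a b : cmx (cv2 a b) = cv2 a%:C b%:C.
Proof. by apply/matrixP; elim/ord2P => j; rewrite /cmx !mxE. Qed.
Lemma cmx_rv2 a b : cmx (rv2 a b) = rv2 a%:C b%:C.
Proof. by apply/matrixP => i; elim/ord2P; rewrite /cmx !mxE. Qed.
Lemma ctrmx_mx2 (p q r s : C) : ctrmx (mx2 p q r s) = mx2 p^* r^* q^* s^*.
Proof. by apply/matrixP; elim/ord2P; elim/ord2P; rewrite /cmx /ctrmx !mxE. Qed.

Lemma ReD x y : cRe (x + y) = cRe x + cRe y. Proof. by case: x => ? ?; case: y => ? ? /=. Qed.
Lemma ImD x y : cIm (x + y) = cIm x + cIm y. Proof. by case: x => ? ?; case: y => ? ? /=. Qed.
Lemma ReN x : cRe (- x) = - cRe x. Proof. by case: x => ? ? /=. Qed.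
Lemma ImN x : cIm (- x) = - cIm x. Proof. by case: x => ? ? /=. Qed.
Lemma ReM x y : cRe (x * y) = cRe x * cRe y - cIm x * cIm y. Proof. by case: x => ? ?; case: y => ? ? /=. Qed.
Lemma ImM x y : cIm (x * y) = cRe x * cIm y + cIm x * cRe y. Proof. by case: x => ? ?; case: y => ? ? /=; ring. Qed.
Lemma ReJ x : cRe x^* = cRe x. Proof. by case: x => ? ? /=. Qed.
Lemma ImJ x : cIm x^* = - cIm x. Proof. by case: x => ? ? /=. Qed.
Lemma ReR a : cRe a%:C = a. Proof. by []. Qed.
Lemma ImR a : cIm a%:C = 0. Proof. by []. Qed.
Lemma ReiC : cRe (iC R) = 0. Proof. by []. Qed.
Lemma ImiC : cIm (iC R) = 1. Proof. by []. Qed.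
Lemma Re0 : cRe (0 : C) = 0. Proof. by []. Qed.
Lemma Im0 : cIm (0 : C) = 0. Proof. by []. Qed.
Lemma Re1 : cRe (1 : C) = 1. Proof. by []. Qed.
Lemma Im1 : cIm (1 : C) = 0. Proof. by []. Qed.

Lemma ceq x y : cRe x = cRe y -> cIm x = cIm y -> x = y.
Proof. by case: x => ? ?; case: y => ? ? /= -> ->. Qed.
End CX.

Definition ReIm := (ReD, ImD, ReN, ImN, ReM, ImM, ReJ, ImJ, ReR, ImR, ReiC, ImiC, Re0, Im0, Re1, Im1).

Lemma ilv_nodes_blk (R : pzRingType) m (x : 'I_m -> R) k (a : 'I_2) :
  ilv_nodes x (blk k a) = if (a : nat) == 0%N then x k else - x k.
Proof.
rewrite /ilv_nodes; have -> : half_ord (blk k a) = k.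
  by apply: val_inj => /=; case: a => [[|[|]]] //= _; lia.
by case: a => [[|[|]]] //= _; rewrite oddD oddM /= ?addbT ?addbF.
Qed.

Lemma ilv_weights_blk (R : Type) m (x : 'I_m -> R) k (a : 'I_2) :
  ilv_weights x (blk k a) = x k.
Proof.
rewrite /ilv_weights; have -> // : half_ord (blk k a) = k.
by apply: val_inj => /=; case: a => [[|[|]]] //= _; lia.
Qed.
Section Aux.
Variable R : rcfType.
Local Notation C := R[i].

Lemma cmx_conj m p (A : 'M[R]_(m,p)) : map_mx (@conjc R) (cmx A) = cmx A.
Proof. by apply/matrixP => i j; rewrite !mxE conjc_real. Qed.

Lemma cmxD m p (A B : 'M[R]_(m,p)) : cmx (A + B) = cmx A + cmx B.
Proof. by apply/matrixP => i j; rewrite !mxE rmorphD. Qed.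

Lemma cmxZ m p a (A : 'M[R]_(m,p)) : cmx (a *: A) = a%:C *: cmx A.
Proof. by apply/matrixP => i j; rewrite !mxE rmorphM. Qed.

Lemma conj_iC (x : R) : (iC R * x%:C)^* = iC R * (- x)%:C.
Proof. by rewrite /iC; simpc. Qed.

Lemma pencil_conj n (M D K : 'M[R]_n) s :
  map_mx (@conjc R) (pencil M D K s) = pencil M D K s^*.
Proof.
rewrite /pencil !map_mxD !map_mxZ !cmx_conj rmorphXn //.
Qed.

Lemma Gres_conj n (M D K : 'M[R]_n) s :
  map_mx (@conjc R) (Gres M D K s) = Gres M D K s^*.
Proof. by rewrite /Gres map_invmx pencil_conj. Qed.

Lemma sqrt2_inv : (Num.sqrt (2:R))^-1 * (Num.sqrt (2:R))^-1 = 2^-1.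
Proof. by rewrite -invfM -expr2 sqr_sqrtr // ler0n. Qed.

Lemma sqrt2_nz : Num.sqrt (2:R) != 0.
Proof. by rewrite sqrtr_eq0 -Order.TotalTheory.ltNge ltr0n. Qed.

Section Sys.
Variables (n : nat) (M D K : 'M[R]_n) (B : 'cV[R]_n) (Cm : 'rV[R]_n) (alpha beta : R).
Hypothesis hD : D = alpha *: M + beta *: K.

Definition Gs (x : R) := Gres M D K (iC R * x%:C).
Definition mm (w z : R) : C := (cmx Cm *m Gs w *m cmx M *m Gs z *m cmx B) 0 0.
Definition kk (w z : R) : C := (cmx Cm *m Gs w *m cmx K *m Gs z *m cmx B) 0 0.
Definition hh (z : R) : C := Htf M D K B Cm (iC R * z%:C).

Lemma iC2 : iC R * iC R = -1.
Proof. by rewrite /iC; simpc. Qed.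

Lemma pencil_exp x : pencil M D K (iC R * x%:C) =
  (- (x ^+ 2)%:C + iC R * x%:C * alpha%:C) *: cmx M + (iC R * x%:C * beta%:C + 1) *: cmx K.
Proof.
apply/matrixP => i j; rewrite /pencil hD !mxE !rmorphD !rmorphM /= exprMn.
rewrite -[iC R ^+ 2]/(iC R * iC R) iC2 /=. ring.
Qed.
Lemma lin_lem (X : 'rV[C]_n) (Y : 'cV[C]_n) (A1 A2 : 'M[C]_n) a b :
  X *m (a *: A1 + b *: A2) *m Y = a *: (X *m A1 *m Y) + b *: (X *m A2 *m Y).
Proof. by rewrite mulmxDr mulmxDl -!scalemxAr -!scalemxAl. Qed.

Lemma ent_lem (X Y : 'M[C]_(1,1)) a b : (a *: X + b *: Y) 0 0 = a * X 0 0 + b * Y 0 0.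
Proof. by rewrite !mxE. Qed.

Lemma alg1 (x y a b u k : C) : -x*u + y*(a*u+b*k) + k = (-x + y*a)*u + (y*b+1)*k.
Proof. ring. Qed.

Lemma res_left w z : Gexists M D K (iC R * w%:C) ->
  - (w ^+ 2)%:C * mm w z + iC R * w%:C * (alpha%:C * mm w z + beta%:C * kk w z) + kk w z = hh z.
Proof.
move=> hw.
have E : hh z = ((cmx Cm *m Gs w) *m pencil M D K (iC R * w%:C) *m (Gs z *m cmx B)) 0 0.
  by rewrite /hh /Htf -!mulmxA (mulmxA (Gs w)) /Gs mulVmx // mul1mx.
rewrite E pencil_exp lin_lem ent_lem /mm /kk !mulmxA; exact: alg1.
Qed.

Lemma res_right w z : Gexists M D K (iC R * z%:C) ->
  - (z ^+ 2)%:C * mm w z + iC R * z%:C * (alpha%:C * mm w z + beta%:C * kk w z) + kk w z = hh w.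
Proof.
move=> hz.
have E : hh w = ((cmx Cm *m Gs w) *m pencil M D K (iC R * z%:C) *m (Gs z *m cmx B)) 0 0.
  by rewrite /hh /Htf -!mulmxA (mulmxA (pencil _ _ _ _)) /Gs mulmxV // mul1mx.
rewrite E pencil_exp lin_lem ent_lem /mm /kk !mulmxA; exact: alg1.
Qed.

Lemma conj_entry2 m (X : 'M[C]_(1,m)) (Y : 'M[C]_(m,1)) :
  ((X *m Y) 0 0)^* = (map_mx (@conjc R) X *m map_mx (@conjc R) Y) 0 0.
Proof. rewrite -(map_mxM (@conjc R)). by rewrite [RHS]mxE. Qed.

Lemma mm_conj w z : (mm w z)^* = mm (- w) (- z).
Proof.
rewrite /mm conj_entry2 !(map_mxM (@conjc R)) !cmx_conj /Gs !Gres_conj !conj_iC.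
by [].
Qed.

Lemma kk_conj w z : (kk w z)^* = kk (- w) (- z).
Proof.
rewrite /kk conj_entry2 !(map_mxM (@conjc R)) !cmx_conj /Gs !Gres_conj !conj_iC.
by [].
Qed.

Lemma hh_conj z : (hh z)^* = hh (- z).
Proof.
by rewrite /hh /Htf conj_entry2 !(map_mxM (@conjc R)) !cmx_conj Gres_conj conj_iC.
Qed.

Lemma prod_entry p q (c : 'I_p -> C) (d : 'I_q -> C) (Lr : 'I_p -> 'rV[C]_n)
  (Uc : 'I_q -> 'cV[C]_n) (X : 'M[C]_n) i j :
  ((\matrix_(k < p, a < n) (c k * Lr k 0 a)) *m X *m (\matrix_(a < n, l < q) (d l * Uc l a 0))) i j
  = c i * d j * (Lr i *m X *m Uc j) 0 0.
Proof.
rewrite !mxE !mulr_sumr; apply: eq_bigr => b _; rewrite !mxE !mulr_suml !mulr_sumr.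
by apply: eq_bigr => a _; rewrite !mxE; ring.
Qed.

Lemma MMt_E Np Nq (z r : 'I_Np -> R) (w f : 'I_Nq -> R) i j :
  MMt M D K B Cm z r w f i j = (f i)%:C * (r j * z j)%:C * mm (w i) (z j).
Proof.
rewrite /MMt /LtlH /Utl (@prod_entry _ _ (fun k => (f k)%:C) (fun l => (r l * z l)%:C)
  (fun k => cmx Cm *m Gs (w k)) (fun l => Gs (z l) *m cmx B)).
by rewrite /mm !mulmxA.
Qed.

Lemma KKt_E Np Nq (z r : 'I_Np -> R) (w f : 'I_Nq -> R) i j :
  KKt M D K B Cm z r w f i j = (f i)%:C * (r j * z j)%:C * kk (w i) (z j).
Proof.
rewrite /KKt /LtlH /Utl (@prod_entry _ _ (fun k => (f k)%:C) (fun l => (r l * z l)%:C)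
  (fun k => cmx Cm *m Gs (w k)) (fun l => Gs (z l) *m cmx B)).
by rewrite /kk !mulmxA.
Qed.

Lemma BBt_E Nq (w f : 'I_Nq -> R) k :
  BBt M D K Cm B w f k 0 = (f k)%:C * hh (w k).
Proof.
rewrite /BBt /LtlH /hh /Htf !mxE !mulr_sumr; apply: eq_bigr => a _; rewrite !mxE; ring.
Qed.

Lemma CCt_E Np (z r : 'I_Np -> R) j :
  CCt M D K B Cm z r 0 j = (r j * z j)%:C * hh (z j).
Proof.
rewrite /CCt /Utl /hh /Htf -mulmxA !mxE !mulr_sumr; apply: eq_bigr => a _; rewrite !mxE; ring.
Qed.

End Sys. End Aux.

Section Post.
Variable R : rcfType.
Local Notation C := R[i].
Local Notation s := ((Num.sqrt (2:R))^-1).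

Definition P1 : 'M[C]_2 := mx2 1 (-1) (iC R) (iC R).
Definition P2 : 'M[C]_2 := mx2 1 1 (iC R) (- iC R).

Lemma ctrmx_scaleR a (X : 'M[C]_2) : ctrmx (a%:C *: X) = a%:C *: ctrmx X.
Proof. by apply/matrixP => i j; rewrite /ctrmx !mxE; apply: ceq; rewrite !ReIm; ring. Qed.

Lemma FXF (X : 'M[C]_2) : F2 R *m X *m ctrmx (F1 R) = (2^-1)%:C *: (P2 *m X *m ctrmx P1).
Proof.
rewrite /F1 /F2 -/P1 -/P2 ctrmx_scaleR -!scalemxAl -!scalemxAr scalerA -rmorphM.
by rewrite sqrt2_inv.
Qed.

Lemma F2X (X : 'cV[C]_2) : F2 R *m X = s%:C *: (P2 *m X).
Proof. by rewrite /F2 -scalemxAl. Qed.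

Lemma XF1 (X : 'rV[C]_2) : X *m ctrmx (F1 R) = s%:C *: (X *m ctrmx P1).
Proof. by rewrite /F1 ctrmx_scaleR -scalemxAr. Qed.

Lemma sqrt2E : Num.sqrt (2:R) = 2 * s.
Proof.
apply: (mulfI (sqrt2_nz R)); rewrite -expr2 sqr_sqrtr ?ler0n //.
by rewrite mulrCA mulfV ?sqrt2_nz // mulr1.
Qed.

Lemma ReMR (a : R) (y : C) : cRe (a%:C * y) = a * cRe y. Proof. by rewrite ReM ReR ImR mul0r subr0. Qed.
Lemma ImMR (a : R) (y : C) : cIm (a%:C * y) = a * cIm y. Proof. by rewrite ImM ReR ImR mul0r addr0. Qed.
Lemma ReMR' (a : R) (y : C) : cRe (y * a%:C) = cRe y * a. Proof. by rewrite ReM ReR ImR mulr0 subr0. Qed.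
Lemma ImMR' (a : R) (y : C) : cIm (y * a%:C) = cIm y * a. Proof. by rewrite ImM ReR ImR mulr0 add0r. Qed.
Lemma ReiCM (y : C) : cRe (iC R * y) = - cIm y. Proof. by rewrite ReM ReiC ImiC mul0r mul1r sub0r. Qed.
Lemma ImiCM (y : C) : cIm (iC R * y) = cRe y. Proof. by rewrite ImM ReiC ImiC mul0r mul1r add0r. Qed.
Lemma ReMi (y : C) : cRe (y * iC R) = - cIm y. Proof. by rewrite mulrC ReiCM. Qed.
Lemma ImMi (y : C) : cIm (y * iC R) = cRe y. Proof. by rewrite mulrC ImiCM. Qed.
Lemma RRM (a b : R) : a%:C * b%:C = (a * b)%:C :> C. Proof. by rewrite rmorphM. Qed.
Lemma conj_iC1 : (iC R)^* = - iC R. Proof. by apply: ceq; rewrite !ReIm ?oppr0. Qed.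

Local Notation ReIm2 := (ReD, ImD, ReN, ImN, ReMR, ImMR, ReMR', ImMR', ReiCM, ImiCM, ReMi, ImMi,
  ReJ, ImJ, ReR, ImR, ReiC, ImiC, Re0, Im0, Re1, Im1, ReM, ImM).
Local Notation csimp := (mul1r, mulr1, mulN1r, mulrN1, mul0r, mulr0, addr0, add0r, conjc1, rmorphN, conjc0, conj_iC1, conjc_real, RRM, mulNr, mulrN, opprK).

Local Notation mxs := (mx2_scale, mx2_mul, mx2_add, mx2_opp, mx2_scalar, cmx_mx2, ctrmx_mx2,
  mx2_cv2, rv2_mx2, cv2_scale, rv2_scale, cmx_cv2, cmx_rv2).

Lemma real_mx2 (e1 e2 e3 e4 : C) : cIm e1 = 0 -> cIm e2 = 0 -> cIm e3 = 0 -> cIm e4 = 0 ->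
  exists A : 'M[R]_2, mx2 e1 e2 e3 e4 = cmx A.
Proof.
move=> h1 h2 h3 h4; exists (mx2 (cRe e1) (cRe e2) (cRe e3) (cRe e4)).
by rewrite cmx_mx2; congr mx2; apply: ceq.
Qed.

Lemma blk_real (g : R -> R -> C) (hg : forall w z, (g w z)^* = g (-w) (-z)) (w z f r : R) :
  exists A, F2 R *m mx2 (f%:C * (r*z)%:C * g w z) (f%:C * (r * -z)%:C * g w (-z))
     (f%:C * (r*z)%:C * g (-w) z) (f%:C*(r * -z)%:C*g (-w) (-z)) *m ctrmx (F1 R) = cmx A.
Proof.
have e : g (-w) z = (g w (-z))^* by rewrite hg opprK.
rewrite FXF /P1 /P2 -(hg w z) e !mxs.
by apply: real_mx2; rewrite ?csimp !ReIm2; ring.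
Qed.

Ltac fixadd := repeat match goal with |- context [Algebra.hasAdd.add _ ?x ?y] =>
  progress change (Algebra.hasAdd.add _ x y) with (x + y) end.

Lemma OmF2 w : cmx (mx2 0 w (-w) 0) *m F2 R = F2 R *m mx2 (iC R * w%:C) 0 0 (iC R * (-w)%:C).
Proof. rewrite /F2 -scalemxAl -scalemxAr !mxs; congr mx2; apply: ceq; rewrite ?csimp !ReIm2; fixadd; ring. Qed.

Lemma F1Th z : ctrmx (F1 R) *m cmx (mx2 0 z (-z) 0) = mx2 (iC R * z%:C) 0 0 (iC R * (-z)%:C) *m ctrmx (F1 R).
Proof. rewrite /F1 ctrmx_scaleR -scalemxAl -scalemxAr !mxs; congr mx2; apply: ceq; rewrite ?csimp !ReIm2; fixadd; ring. Qed.

Lemma lin_right (F G W Th XM XK : 'M[C]_2) (c a b : C) : G *m Th = W *m G ->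
 - ((F *m XM *m G) *m c%:M) + (a *: (F *m XM *m G) + b *: (F *m XK *m G)) *m Th + F *m XK *m G
 = F *m (- (c *: XM) + (a *: XM + b *: XK) *m W + XK) *m G.
Proof.
move=> h.
have E : a *: (F *m XM *m G) + b *: (F *m XK *m G) = F *m (a *: XM + b *: XK) *m G
  by rewrite mulmxDr mulmxDl -!scalemxAr -!scalemxAl.
rewrite E mul_mx_scalar -(mulmxA (F *m (a *: XM + b *: XK)) G Th) h !mulmxA.
do 3 rewrite ?(mulmxDr, mulmxDl, mulmxN, mulNmx) -?scalemxAr -?scalemxAl ?mulmxA.
done.
Qed.

Lemma lin_left (F G W Om XM XK : 'M[C]_2) (c a b : C) : Om *m F = F *m W ->
 - (c%:M *m (F *m XM *m G)) + Om *m (a *: (F *m XM *m G) + b *: (F *m XK *m G)) + F *m XK *m G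
 = F *m (- (c *: XM) + W *m (a *: XM + b *: XK) + XK) *m G.
Proof.
move=> h.
have E : a *: (F *m XM *m G) + b *: (F *m XK *m G) = F *m (a *: XM + b *: XK) *m G
  by rewrite mulmxDr mulmxDl -!scalemxAr -!scalemxAl.
rewrite E mul_scalar_mx !mulmxA h.
do 3 rewrite ?(mulmxDr, mulmxDl, mulmxN, mulNmx) -?scalemxAr -?scalemxAl ?mulmxA.
done.
Qed.
End Post.

Ltac fixadd := repeat match goal with |- context [Algebra.hasAdd.add _ ?x ?y] =>
  progress change (Algebra.hasAdd.add _ x y) with (x + y) end.
Local Notation ReIm2 := (ReD, ImD, ReN, ImN, ReMR, ImMR, ReMR', ImMR', ReiCM, ImiCM, ReMi, ImMi,
  ReJ, ImJ, ReR, ImR, ReiC, ImiC, Re0, Im0, Re1, Im1, ReM, ImM).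
Local Notation csimp := (mul1r, mulr1, mulN1r, mulrN1, mul0r, mulr0, addr0, add0r, conjc1, rmorphN, conjc0, conj_iC1, conjc_real, RRM, mulNr, mulrN, opprK).
Local Notation mxs := (mx2_scale, mx2_mul, mx2_add, mx2_opp, mx2_scalar, cmx_mx2, ctrmx_mx2,
  mx2_cv2, rv2_mx2, cv2_scale, rv2_scale, cmx_cv2, cmx_rv2).


Section U.
Variable R : rcfType.
Local Notation C := R[i].

Definition Xf (g : R -> R -> C) (w z f r : R) : 'M[C]_2 :=
  mx2 (f%:C * (r*z)%:C * g w z) (f%:C * (r * -z)%:C * g w (-z))
      (f%:C * (r*z)%:C * g (-w) z) (f%:C * (r * -z)%:C * g (-w) (-z)).

Lemma stepA1 (mmf kkf : R -> R -> C) (hf : R -> C) (al be w z f r : R) :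
  (forall w' z', w' = w \/ w' = -w -> - (w'^+2)%:C * mmf w' z' +
     iC R * w'%:C * (al%:C * mmf w' z' + be%:C * kkf w' z') + kkf w' z' = hf z') ->
  - ((w ^+ 2)%:C *: Xf mmf w z f r) +
     mx2 (iC R * w%:C) 0 0 (iC R * (- w)%:C) *m (al%:C *: Xf mmf w z f r + be%:C *: Xf kkf w z f r)
     + Xf kkf w z f r
  = mx2 (f%:C * (r * z)%:C * hf z) (f%:C * (r * - z)%:C * hf (- z))
        (f%:C * (r * z)%:C * hf z) (f%:C * (r * - z)%:C * hf (- z)).
Proof.
move=> res; rewrite /Xf !mxs.
have e1 := res w z (or_introl erefl).
have e2 := res w (- z) (or_introl erefl).
have e3 := res (- w) z (or_intror erefl).
have e4 := res (- w) (- z) (or_intror erefl).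
rewrite sqrrN in e3 e4.
by congr mx2; [rewrite -e1 | rewrite -e2 | rewrite -e3 | rewrite -e4]; ring.
Qed.

Lemma stepA2 (mmf kkf : R -> R -> C) (hf : R -> C) (al be w z f r : R) :
  (forall w' z', z' = z \/ z' = -z -> - (z'^+2)%:C * mmf w' z' +
     iC R * z'%:C * (al%:C * mmf w' z' + be%:C * kkf w' z') + kkf w' z' = hf w') ->
  - ((z ^+ 2)%:C *: Xf mmf w z f r) +
     (al%:C *: Xf mmf w z f r + be%:C *: Xf kkf w z f r) *m mx2 (iC R * z%:C) 0 0 (iC R * (- z)%:C)
     + Xf kkf w z f r
  = mx2 (f%:C * (r * z)%:C * hf w) (f%:C * (r * - z)%:C * hf w)
        (f%:C * (r * z)%:C * hf (- w)) (f%:C * (r * - z)%:C * hf (- w)).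
Proof.
move=> res; rewrite /Xf !mxs.
have e1 := res w z (or_introl erefl).
have e2 := res w (- z) (or_intror erefl).
have e3 := res (- w) z (or_introl erefl).
have e4 := res (- w) (- z) (or_intror erefl).
rewrite sqrrN in e2 e4.
by congr mx2; [rewrite -e1 | rewrite -e2 | rewrite -e3 | rewrite -e4]; ring.
Qed.

Lemma final1 (h : C) (f r z : R) :
  F2 R *m mx2 (f%:C * (r * z)%:C * h) (f%:C * (r * - z)%:C * h^*)
              (f%:C * (r * z)%:C * h) (f%:C * (r * - z)%:C * h^*) *m ctrmx (F1 R)
  = (2 * f * r * z)%:C *: cmx (mx2 (cRe h) (cIm h) 0 0).
Proof.
rewrite FXF /P1 /P2 !mxs.
by congr mx2; apply: ceq; rewrite ?csimp !ReIm2; fixadd; field.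
Qed.

Lemma final2 (h : C) (f r z : R) :
  F2 R *m mx2 (f%:C * (r * z)%:C * h) (f%:C * (r * - z)%:C * h)
              (f%:C * (r * z)%:C * h^*) (f%:C * (r * - z)%:C * h^*) *m ctrmx (F1 R)
  = (2 * f * r * z)%:C *: cmx (mx2 (cRe h) 0 (- cIm h) 0).
Proof.
rewrite FXF /P1 /P2 !mxs.
by congr mx2; apply: ceq; rewrite ?csimp !ReIm2; fixadd; field.
Qed.
End U.

Theorem mainTheorem3 (R : rcfType) (n : nat) (M D K : 'M[R]_n)
  (B : 'cV[R]_n) (Cm : 'rV[R]_n) (alpha beta : R) (np nq : nat)
  (zeta rho : 'I_np -> R) (omega phi : 'I_nq -> R) :
  M \in unitmx ->
  D = alpha *: M + beta *: K -> 0 <= alpha -> 0 <= beta ->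
  (1 <= np)%N -> (1 <= nq)%N ->
  (forall j, 0 < zeta j) -> (forall k, 0 < omega k) ->
  (forall j, Gexists M D K (iC R * (zeta j)%:C) /\ Gexists M D K (iC R * (- zeta j)%:C)) ->
  (forall k, Gexists M D K (iC R * (omega k)%:C) /\ Gexists M D K (iC R * (- omega k)%:C)) ->
  let zs := ilv_nodes zeta in let rs := ilv_weights rho in
  let ws := ilv_nodes omega in let fs := ilv_weights phi in
  let H := Htf M D K B Cm in
  let MR k j := F2 R *m blk2 (MMt M D K B Cm zs rs ws fs) k j *m ctrmx (F1 R) in
  let KR k j := F2 R *m blk2 (KKt M D K B Cm zs rs ws fs) k j *m ctrmx (F1 R) in
  let BR k := F2 R *m blkc2 (BBt M D K Cm B ws fs) k in
  let CR j := blkr2 (CCt M D K B Cm zs rs) j *m ctrmx (F1 R) in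
  let Om2 k : 'M[R[i]]_2 := ((omega k ^+ 2)%:C)%:M in
  let Om1 k : 'M[R[i]]_2 := cmx (mx2 0 (omega k) (- omega k) 0) in
  let Th2 j : 'M[R[i]]_2 := ((zeta j ^+ 2)%:C)%:M in
  let Th1 j : 'M[R[i]]_2 := cmx (mx2 0 (zeta j) (- zeta j) 0) in
  let Hz k j : 'M[R[i]]_2 := (2 * phi k * rho j * zeta j)%:C *:
      cmx (mx2 (complex.Re (H (iC R * (zeta j)%:C))) (complex.Im (H (iC R * (zeta j)%:C))) 0 0) in
  let Hw k j : 'M[R[i]]_2 := (2 * phi k * rho j * zeta j)%:C *:
      cmx (mx2 (complex.Re (H (iC R * (omega k)%:C))) 0 (- complex.Im (H (iC R * (omega k)%:C))) 0) in
  [/\ (forall k j, (exists A : 'M[R]_2, MR k j = cmx A) /\ (exists A : 'M[R]_2, KR k j = cmx A)),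
      (forall k, BR k = (Num.sqrt 2 * phi k)%:C *:
          cmx (cv2 (complex.Re (H (iC R * (omega k)%:C))) (- complex.Im (H (iC R * (omega k)%:C))))),
      (forall j, CR j = (Num.sqrt 2 * rho j * zeta j)%:C *:
          cmx (rv2 (complex.Re (H (iC R * (zeta j)%:C))) (complex.Im (H (iC R * (zeta j)%:C))))),
      (forall k j, - (Om2 k *m MR k j) + Om1 k *m (alpha%:C *: MR k j + beta%:C *: KR k j)
                   + KR k j = Hz k j) &
      (forall k j, - (MR k j *m Th2 j) + (alpha%:C *: MR k j + beta%:C *: KR k j) *m Th1 j
                   + KR k j = Hw k j)].

Proof.
move=> hM hD ha hb hnp hnq hz hw hGz hGw zs rs ws fs H MR KR BR CR Om2 Om1 Th2 Th1 Hz Hw.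
split.
- move=> k j; split.
  + rewrite /MR blk2E !MMt_E /zs /rs /ws /fs !ilv_nodes_blk !ilv_weights_blk /=.
    exact: (blk_real _ (mm _ _ M D K B Cm) (mm_conj _ _ M D K B Cm)).
  + rewrite /KR blk2E !KKt_E /zs /rs /ws /fs !ilv_nodes_blk !ilv_weights_blk /=.
    exact: (blk_real _ (kk _ _ M D K B Cm) (kk_conj _ _ M D K B Cm)).
- move=> k.
  rewrite /BR blkc2E !BBt_E /ws /fs !ilv_nodes_blk !ilv_weights_blk /=.
  rewrite -(hh_conj _ _ M D K B Cm (omega k)) /hh /H F2X /P2 [in RHS]sqrt2E !mxs.
  by congr cv2; apply: ceq; rewrite ?csimp !ReIm2; fixadd; ring.
- move=> j.
  rewrite /CR blkr2E !CCt_E /zs /rs !ilv_nodes_blk !ilv_weights_blk /=.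
  rewrite -(hh_conj _ _ M D K B Cm (zeta j)) /hh /H XF1 /P1 [in RHS]sqrt2E !mxs.
  by congr rv2; apply: ceq; rewrite ?csimp !ReIm2; fixadd; ring.
- move=> k j.
  have [hw0 hw1] := hGw k.
  rewrite /Om2 /Om1 /MR /KR (lin_left _ _ _ _ _ _ _ _ _ _ (OmF2 _ (omega k))).
  have -> : blk2 (MMt M D K B Cm zs rs ws fs) k j = Xf _ (mm _ _ M D K B Cm) (omega k) (zeta j) (phi k) (rho j).
    by rewrite blk2E !MMt_E /zs /rs /ws /fs !ilv_nodes_blk !ilv_weights_blk /=.
  have -> : blk2 (KKt M D K B Cm zs rs ws fs) k j = Xf _ (kk _ _ M D K B Cm) (omega k) (zeta j) (phi k) (rho j).
    by rewrite blk2E !KKt_E /zs /rs /ws /fs !ilv_nodes_blk !ilv_weights_blk /=.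
  rewrite (stepA1 _ _ _ (hh _ _ M D K B Cm)); last first.
    move=> w' z' [->|->]; [exact: (res_left _ _ _ _ _ B Cm _ _ hD _ _ hw0) |
                           exact: (res_left _ _ _ _ _ B Cm _ _ hD _ _ hw1)].
  by rewrite -(hh_conj _ _ M D K B Cm (zeta j)) final1.
- move=> k j.
  have [hz0 hz1] := hGz j.
  rewrite /Th2 /Th1 /MR /KR (lin_right _ _ _ _ _ _ _ _ _ _ (F1Th _ (zeta j))).
  have -> : blk2 (MMt M D K B Cm zs rs ws fs) k j = Xf _ (mm _ _ M D K B Cm) (omega k) (zeta j) (phi k) (rho j).
    by rewrite blk2E !MMt_E /zs /rs /ws /fs !ilv_nodes_blk !ilv_weights_blk /=.
  have -> : blk2 (KKt M D K B Cm zs rs ws fs) k j = Xf _ (kk _ _ M D K B Cm) (omega k) (zeta j) (phi k) (rho j).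
    by rewrite blk2E !KKt_E /zs /rs /ws /fs !ilv_nodes_blk !ilv_weights_blk /=.
  rewrite (stepA2 _ _ _ (hh _ _ M D K B Cm)); last first.
    move=> w' z' [->|->]; [exact: (res_right _ _ _ _ _ B Cm _ _ hD _ _ hz0) |
                           exact: (res_right _ _ _ _ _ B Cm _ _ hD _ _ hz1)].
  by rewrite -(hh_conj _ _ M D K B Cm (omega k)) final2.
Qed.
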